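(* There is an absolute constant $C$ such that for every prime power $q$, every $0<\varepsilon<1$, and every (unweighted) linear code $\mathcal{C}\subseteq\mathbb{F}_q^n$ of dimension $k \ge 1$, $\mathcal{C}$ has a $(1\pm\varepsilon)$-sparsifier of size at most $C k^2 \log_2(q)/\varepsilon^2$. Moreover, one such sparsifier is obtained with positive probability as follows: for each coordinate $i$ in the support of $\mathcal{C}$ let $w_i = \min\{\mathrm{wt}(c) : c\in\mathcal{C}, c_i\neq 0\}$, and sample coordinate $i$ independently with probability $p_i=\min(1, 10 k\log_2(q)/(\varepsilon^2 w_i))$, assigning weight $1/p_i$ if sampled.
   Context: $\mathrm{wt}(c)$ is the number of nonzero coordinates. The support of $\mathcal{C}$ is the set of coordinates $i$ such that some codeword is nonzero at $i$. A $(1\pm\varepsilon)$-sparsifier of size $s$ is a set $S\subseteq[n]$, $|S|\le s$, with nonnegative weights $(w'_i)_{i\in S}$ such that $(1-\varepsilon)\mathrm{wt}(v)\le\sum_{i\in S:v_i\neq0}w'_i\le(1+\varepsilon)\mathrm{wt}(v)$ for all $v\in\mathcal{C}$. *)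

(* Defs.v *)
From HB Require Import structures.
From mathcomp Require Import all_boot all_order all_algebra.
From mathcomp Require Import boolp reals exp.
Set Implicit Arguments. Unset Strict Implicit. Unset Printing Implicit Defensive.
Import Order.TTheory GRing.Theory Num.Theory.
Local Open Scope ring_scope.

Section Codes.
Variables (F : finFieldType) (n : nat).

Definition wt (v : 'rV[F]_n) : nat := #|[set i : 'I_n | v 0 i != 0]|.

Definition code_support (C : {vspace 'rV[F]_n}) : {set 'I_n} :=
  [set i : 'I_n | [exists v : 'rV[F]_n, (v \in C) && (v 0 i != 0)]].

(* w_i = min { wt c : c in C, c_i <> 0 } (default n, irrelevant on the support). *)
Definition min_wt (C : {vspace 'rV[F]_n}) (i : 'I_n) : nat :=
  \big[minn/n]_(v : 'rV[F]_n | (v \in C) && (v 0 i != 0)) wt v.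

Variable R : realType.

Definition is_sparsifier (C : {vspace 'rV[F]_n}) (eps : R)
    (S : {set 'I_n}) (w : 'I_n -> R) : Prop :=
  (forall i, i \in S -> 0 <= w i) /\
  (forall v, v \in C ->
     (1 - eps) * (wt v)%:R <= \sum_(i in S | v 0 i != 0) w i /\
     \sum_(i in S | v 0 i != 0) w i <= (1 + eps) * (wt v)%:R).

Definition log2 (x : R) : R := ln x / ln 2.

Definition samp_prob (C : {vspace 'rV[F]_n}) (eps : R) (i : 'I_n) : R :=
  Num.min 1 (10 * (\dim C)%:R * log2 #|F|%:R / (eps ^+ 2 * (min_wt C i)%:R)).

(* Probability that the independent sampling over the support returns exactly S
   (meaningful for S \subset code_support C). *)
Definition samp_pr (C : {vspace 'rV[F]_n}) (eps : R) (S : {set 'I_n}) : R :=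
  \prod_(i in code_support C)
     (if i \in S then samp_prob C eps i else 1 - samp_prob C eps i).

Definition samp_weight (C : {vspace 'rV[F]_n}) (eps : R) (i : 'I_n) : R :=
  (samp_prob C eps i)^-1.

End Codes.

(* Main.v *)
Require Import Defs.
From HB Require Import structures.
From mathcomp Require Import all_boot all_order all_algebra all_field.
From mathcomp Require Import boolp reals sequences exp.
From mathcomp Require Import ring lra.
Import Order.TTheory GRing.Theory Num.Theory.
Local Open Scope ring_scope.

Section Analytic.
Variable R : realType.

Lemma expR_sq_ge (y : R) : 0 <= y -> (1 + y/2) ^+ 2 <= expR y.
Proof.
move=> y0.
have -> : expR y = expR (y/2) ^+ 2 by rewrite -expRM_natl; congr expR; field.
rewrite lerXn2r ?nnegrE ?expR_ge0 //.
- lra.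
- exact: expR_ge1Dx.
Qed.

Lemma expN_le (y : R) : 0 <= y -> expR (- y) <= 1 - y + 3/4 * y ^+ 2.
Proof.
move=> y0.
have h := @expR_sq_ge y y0.
have e1 : expR (- y) * expR y = 1 by rewrite -expRD addNr expR0.
have e0 : 0 < expR (- y) := expR_gt0 _.
set b := 1 - y + 3/4 * y ^+ 2.
have hb : 1 <= b * (1 + y/2) ^+ 2.
  rewrite /b; have : 0 <= y ^+ 4 by rewrite exprn_ge0.
  have -> : y ^+ 4 = y ^+ 2 * y ^+ 2 by rewrite -exprD.
  move=> h4; nra.
have b0 : 0 <= b by rewrite /b; nra.
nra.
Qed.

Lemma expR_le_inv (y : R) : y < 1 -> expR y * (1 - y) <= 1.
Proof.
move=> y1.
have := expR_ge1Dx (- y); have e1 : expR y * expR (- y) = 1 by rewrite -expRD subrr expR0.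
have := expR_gt0 y; nra.
Qed.

Lemma expP_le (y : R) : 0 <= y <= 1/2 -> expR y <= 1 + y + y ^+ 2.
Proof.
move=> /andP[y0 y1].
have -> : expR y = expR (y/4) ^+ 4 by rewrite -expRM_natl; congr expR; field.
have h1 := expR_le_inv (y/4) ltac:(lra).
have e0 := expR_gt0 (y/4).
set e := expR (y/4) in h1 e0 *.
set u := 1 - y/4.
have u0 : 0 < u by rewrite /u; lra.
have key : 1 <= u ^+ 4 * (1 + y + y ^+ 2).
  rewrite /u; nra.
have eu : e * u <= 1 by [].
have : e ^+ 4 * u ^+ 4 <= 1.
  rewrite -exprMn; apply: exprn_ile1; last by [].
  by apply: mulr_ge0; lra.
move=> h4.
have p0 : 0 <= e ^+ 4 by rewrite exprn_ge0 // ltW.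
nra.
Qed.

Lemma fac_up (p t M : R) : 0 < p <= 1 -> 0 <= t -> (p < 1 -> p^-1 <= M) ->
  0 <= M -> t * M <= 1/2 -> p * expR (t / p) + (1 - p) <= expR (t + t ^+ 2 * M).
Proof.
move=> /andP[p0 p1] t0 hM M0 tM.
have tt : 0 <= t ^+ 2 * M by rewrite mulr_ge0 // exprn_ge0.
have [pe|plt] := eqVneq p 1.
  rewrite pe divr1 mul1r subrr addr0 ler_expR; lra.
have plt1 : p < 1 by rewrite lt_neqAle plt p1.
have xM := hM plt1.
have px : p * p^-1 = 1 by rewrite mulfV // gt_eqF.
have x0 : 0 < p^-1 by rewrite invr_gt0.
have y0 : 0 <= t / p by rewrite divr_ge0 // ltW.
have y1 : t / p <= 1/2.
  apply: le_trans tM; rewrite ler_wpM2l //.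
have h := @expP_le (t / p) ltac:(by rewrite y0 y1).
apply: le_trans (expR_ge1Dx _).
have : p * expR (t / p) <= p * (1 + t / p + (t / p) ^+ 2) by rewrite ler_wpM2l // ltW.
have -> : p * (1 + t / p + (t / p) ^+ 2) = p + t + t ^+ 2 * p^-1.
  by field; rewrite gt_eqF.
have : t ^+ 2 * p^-1 <= t ^+ 2 * M by rewrite ler_wpM2l // exprn_ge0.
lra.
Qed.

Lemma fac_lo (p t M : R) : 0 < p <= 1 -> 0 <= t -> (p < 1 -> p^-1 <= M) ->
  0 <= M -> p * expR (- (t / p)) + (1 - p) <= expR (- t + 3/4 * t ^+ 2 * M).
Proof.
move=> /andP[p0 p1] t0 hM M0.
have tt : 0 <= 3/4 * t ^+ 2 * M by rewrite !mulr_ge0 // ?exprn_ge0 //; lra.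
have [pe|plt] := eqVneq p 1.
  rewrite pe divr1 mul1r subrr addr0 ler_expR; lra.
have plt1 : p < 1 by rewrite lt_neqAle plt p1.
have xM := hM plt1.
have x0 : 0 < p^-1 by rewrite invr_gt0.
have y0 : 0 <= t / p by rewrite divr_ge0 // ltW.
have h := @expN_le (t / p) y0.
apply: le_trans (expR_ge1Dx _).
have : p * expR (- (t / p)) <= p * (1 - t / p + 3/4 * (t / p) ^+ 2) by rewrite ler_wpM2l // ltW.
have -> : p * (1 - t / p + 3/4 * (t / p) ^+ 2) = p - t + 3/4 * t ^+ 2 * p^-1.
  by field; rewrite gt_eqF.
have : 3/4 * t ^+ 2 * p^-1 <= 3/4 * t ^+ 2 * M.
  by rewrite ler_wpM2l // mulr_ge0 // ?exprn_ge0 //; lra.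
lra.
Qed.
End Analytic.
Set Implicit Arguments. Unset Strict Implicit.


Section Prob.
Variables (R : realType) (n : nat).

Lemma sum_prod_sets (G : 'I_n -> bool -> R) :
  \sum_(S : {set 'I_n}) \prod_i G i (i \in S) = \prod_i (G i true + G i false).
Proof.
have -> : \prod_i (G i true + G i false) = \prod_i \sum_(b : bool) G i b.
  by apply: eq_bigr => i _; rewrite big_bool.
rewrite bigA_distr_bigA.
rewrite (reindex (fun f : {ffun 'I_n -> bool} => [set i | f i])) /=.
  by apply: eq_bigr => f _; apply: eq_bigr => i _; rewrite inE.
exists (fun S : {set 'I_n} => [ffun i => i \in S]) => x _.
  by apply/ffunP => i; rewrite ffunE inE.
by apply/setP => i; rewrite inE ffunE.
Qed.

Variables (T : {set 'I_n}) (p : 'I_n -> R).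
Hypothesis p01 : forall i, i \in T -> 0 <= p i <= 1.

Definition pfac i (b : bool) : R :=
  if i \in T then (if b then p i else 1 - p i) else (if b then 0 else 1).
Definition PS (S : {set 'I_n}) : R := \prod_i pfac i (i \in S).

Lemma PS_ge0 S : 0 <= PS S.
Proof.
apply: prodr_ge0 => i _; rewrite /pfac.
case: ifP => iT; case: (i \in S) => //; have := p01 iT; lra.
Qed.

Definition Efac i (f : bool -> R) : R :=
  if i \in T then p i * f true + (1 - p i) * f false else f false.

Lemma Eprod (f : 'I_n -> bool -> R) :
  \sum_S PS S * \prod_i f i (i \in S) = \prod_i Efac i (f i).
Proof.
have -> : \prod_i Efac i (f i) = \prod_i (pfac i true * f i true + pfac i false * f i false).
  apply: eq_bigr => i _; rewrite /Efac /pfac; case: ifP => _; lra.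
rewrite -(sum_prod_sets (fun i b => pfac i b * f i b)); apply: eq_bigr => S _.
by rewrite /PS -big_split.
Qed.

Lemma PS_sum1 : \sum_S PS S = 1.
Proof.
transitivity (\sum_S PS S * \prod_(i < n) (fun _ _ => 1 : R) i (i \in S)).
  by apply: eq_bigr => S _; rewrite big1 ?mulr1.
rewrite (Eprod (fun _ _ => 1)); apply: big1 => i _; rewrite /Efac; case: ifP => _; lra.
Qed.

Lemma PS_subset S : PS S != 0 -> S \subset T.
Proof.
move=> h; apply/subsetP => i iS; apply/negPn/negP => iT.
move: h; rewrite /PS (bigD1 i) //= /pfac (negbTE iT) iS mul0r eqxx //.
Qed.

Lemma Eind i : \sum_S PS S * (i \in S)%:R = if i \in T then p i else 0.
Proof.
have := Eprod (fun j b => if j == i then b%:R else 1).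
have -> : \sum_S PS S * \prod_j (if j == i then (j \in S)%:R else 1) =
          \sum_S PS S * (i \in S)%:R.
  apply: eq_bigr => S _; congr (_ * _).
  by rewrite (bigD1 i) //= eqxx big1 ?mulr1 // => j /negbTE ->.
move=> ->; rewrite (bigD1 i) //= eqxx big1 ?mulr1.
  by rewrite /Efac; case: ifP => _; rewrite ?mulr1 ?mulr0 ?addr0.
move=> j /negbTE ji; rewrite /Efac ji; case: ifP => _; lra.
Qed.

Lemma Ecard : \sum_S PS S * #|S|%:R = \sum_(i in T) p i.
Proof.
have -> : \sum_S PS S * #|S|%:R = \sum_i \sum_S PS S * (i \in S)%:R.
  rewrite exchange_big; apply: eq_bigr => S _.
  rewrite -mulr_sumr -sum1_card natr_sum big_mkcond /=; congr (_ * _).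
  by apply: eq_bigr => i _; case: (i \in S).
rewrite [RHS]big_mkcond; apply: eq_bigr => i _; exact: Eind.
Qed.
End Prob.


Lemma sum_sub_le (R : numDomainType) (I : finType) (A B : pred I) (f : I -> R) :
  {subset A <= B} -> (forall i, B i -> 0 <= f i) ->
  \sum_(i | A i) f i <= \sum_(i | B i) f i.
Proof.
move=> AB f0; rewrite [X in _ <= X](bigID A) /=.
have -> : \sum_(i | B i && A i) f i = \sum_(i | A i) f i.
  apply: eq_bigl => i; case Ai: (A i); rewrite ?andbT ?andbF //; exact: AB.
rewrite lerDl; apply: sumr_ge0 => i /andP[Bi _]; exact: f0.
Qed.

Section Code.
Variables (F : finFieldType) (n : nat).
Implicit Types (C D : {vspace 'rV[F]_n}) (v u : 'rV[F]_n).

Lemma wt_le v : (wt v <= n)%N.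
Proof. by rewrite /wt; apply: leq_trans (max_card _) _; rewrite card_ord. Qed.

Lemma wt_gt0 v i : v 0 i != 0 -> (0 < wt v)%N.
Proof. by move=> h; rewrite /wt card_gt0; apply/set0Pn; exists i; rewrite inE. Qed.

Lemma wt0 : wt (0 : 'rV[F]_n) = 0%N.
Proof. by rewrite /wt; apply/eqP; rewrite cards_eq0; apply/eqP/setP => i; rewrite !inE mxE eqxx. Qed.

Lemma bigminn_le (I : eqType) (r : seq I) (P : pred I) (f : I -> nat) x j :
  j \in r -> P j -> (\big[minn/x]_(i <- r | P i) f i <= f j)%N.
Proof.
elim: r => // a r IHr; rewrite inE big_cons => /orP[/eqP <- Pj | jr Pj].
  by rewrite Pj geq_minl.
case: ifP => _; last exact: IHr.
by rewrite geq_min IHr ?orbT.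
Qed.

Lemma min_wt_le C i v : v \in C -> v 0 i != 0 -> (min_wt C i <= wt v)%N.
Proof.
move=> vC vi; rewrite /min_wt; apply: bigminn_le; first by rewrite mem_index_enum.
by rewrite vC vi.
Qed.

Lemma min_wt_attained C i : i \in code_support C ->
  exists v, [/\ v \in C, v 0 i != 0 & wt v = min_wt C i].
Proof.
rewrite inE => /existsP[v0 /andP[v0C v0i]].
have : (min_wt C i == n) || [exists v, [&& v \in C, v 0 i != 0 & wt v == min_wt C i]].
  rewrite /min_wt; apply: (big_ind (fun x => (x == n) || [exists v, [&& v \in C, v 0 i != 0 & wt v == x]])).
  - by rewrite eqxx.
  - move=> x y hx hy; rewrite /minn; case: ifP => _; [exact: hx| exact: hy].
  - move=> v /andP[vC vi]; apply/orP; right; apply/existsP; exists v; by rewrite vC vi eqxx.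
case/orP => [/eqP hn | /existsP[v /and3P[vC vi /eqP hv]]]; last by exists v.
exists v0; split => //; apply/eqP; rewrite eqn_leq min_wt_le // andbT hn; exact: wt_le.
Qed.

Lemma min_wt_gt0 C i : i \in code_support C -> (0 < min_wt C i)%N.
Proof. by case/min_wt_attained => v [_ vi <-]; apply: wt_gt0 vi. Qed.

Lemma in_support C i v : v \in C -> v 0 i != 0 -> i \in code_support C.
Proof. by move=> vC vi; rewrite inE; apply/existsP; exists v; rewrite vC vi. Qed.

Variable R : realType.

Lemma sum_inv_min_wt D :
  \sum_(i in code_support D) ((min_wt D i)%:R : R)^-1 <= (\dim D)%:R.
Proof.
move: {2}(\dim D) (leqnn (\dim D)) => m; elim: m D => [|m IH] D hD.
  have : D = 0%VS by apply/eqP; rewrite -dimv_eq0 -leqn0.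
  move=> D0; rewrite big_pred0 // => i; apply/negbTE; rewrite inE; apply/existsP => -[v /andP[]].
  by rewrite D0 memv0 => /eqP -> ; rewrite mxE eqxx.
case: (set_0Vmem (code_support D)) => [->|[i0 i0S]].
  by rewrite big_set0 ler0n.
have exP : exists d, [exists v, [&& v \in D, v != 0 & wt v == d]].
  case/min_wt_attained: i0S => v [vD vi _]; exists (wt v); apply/existsP; exists v.
  rewrite vD eqxx andbT; apply/eqP => v0; move: vi; by rewrite v0 mxE eqxx.
case: (ex_minnP exP) => d /existsP[v /and3P[vD vn0 /eqP wv]] dmin.
have dmin' : forall u, u \in D -> u != 0 -> (d <= wt u)%N.
  by move=> u uD un0; apply: dmin; apply/existsP; exists u; rewrite uD un0 eqxx.
set A := [set i | v 0 i != 0].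
have cA : #|A| = d by [].
have [j vj] : exists j, v 0 j != 0.
  apply/existsP; apply: contraR vn0 => /existsPn h; apply/eqP/rowP => j.
  by rewrite mxE; apply/eqP; apply/negPn; rewrite h.
have d0 : (0 < d)%N by rewrite -wv; exact: wt_gt0 vj.
have AS : {subset A <= code_support D}.
  by move=> i; rewrite inE => vi; apply: in_support vD vi.
have wA : forall i, i \in A -> min_wt D i = d.
  move=> i; rewrite inE => vi; apply/eqP; rewrite eqn_leq -{1}wv min_wt_le //=.
  case/min_wt_attained: (in_support vD vi) => u [uD ui <-].
  apply: dmin' uD _; apply/eqP => u0; move: ui; by rewrite u0 mxE eqxx.
pose dv : 'rV[F]_n := \row_j (if j \in A then 0 else 1).
pose g : 'End('rV[F]_n) := linfun (mulmxr (diag_mx dv)).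
have gE : forall u j, g u 0 j = if j \in A then 0 else u 0 j.
  move=> u k; rewrite lfunE /= mul_mx_diag !mxE; case: ifP => _; by rewrite ?mulr0 ?mulr1.
pose D' := (g @: D)%VS.
have dimD' : (\dim D' < \dim D)%N.
  rewrite -(limg_ker_dim g D) -/D' -{1}(add0n (\dim D')) ltn_add2r lt0n dimv_eq0.
  apply/negP => /eqP h.
  have : v \in (D :&: lker g)%VS.
    rewrite memv_cap vD memv_ker; apply/eqP/rowP => k; rewrite gE !mxE.
    by case: ifP => // ; rewrite inE => /negbFE/eqP.
  by rewrite h memv0 (negbTE vn0).
have IHD' := IH D' ltac:(by rewrite -ltnS; apply: leq_trans dimD' hD).
have key : forall i, i \in code_support D -> i \notin A ->
    i \in code_support D' /\ (0 < min_wt D' i <= min_wt D i)%N.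
  move=> i iS iA; case/min_wt_attained: (iS) => u [uD ui wu].
  have gu : g u 0 i != 0 by rewrite gE (negbTE iA).
  have gD : g u \in D' by apply: memv_img.
  have iS' := in_support gD gu.
  split => //; rewrite min_wt_gt0 //= -wu; apply: leq_trans (min_wt_le gD gu) _.
  rewrite /wt; apply: subset_leq_card; apply/subsetP => k; rewrite !inE gE.
  by case: ifP => //; rewrite eqxx.
rewrite (bigID (fun i => i \in A)) /=.
have -> : \sum_(i in code_support D | i \in A) ((min_wt D i)%:R : R)^-1 = 1.
  transitivity (\sum_(i in A) (d%:R : R)^-1).
    apply: eq_big => i; first by case iA: (i \in A); rewrite ?andbT ?andbF // AS.
    by case/andP => _ /wA ->.
  by rewrite sumr_const cA -[X in X = 1]mulr_natr mulVf // pnatr_eq0 -lt0n.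
have -> : (\dim D)%:R = 1 + (\dim D - 1)%:R :> R.
  by rewrite natrB ?subnKC; [lra| rewrite (leq_trans _ dimD')].
rewrite lerD2l; apply: le_trans (_ : (\dim D')%:R <= _); last first.
  by rewrite ler_nat -ltnS subn1 prednK // (leq_trans _ dimD').
apply: le_trans IHD'.
apply: le_trans (_ : \sum_(i in code_support D | i \notin A) ((min_wt D' i)%:R : R)^-1 <= _).
  apply: ler_sum => i /andP[iS iA]; have [_ /andP[h1 h2]] := key i iS iA.
  rewrite lef_pV2 ?ler_nat // posrE ltr0n //; exact: leq_trans h2.
apply: sum_sub_le.
  by move=> i /andP[iS iA]; have [] := key i iS iA.
by move=> i _; rewrite invr_ge0 ler0n.
Qed.
End Code.


Section Main.
Variables (R : realType) (F : finFieldType) (n : nat) (C : {vspace 'rV[F]_n}) (eps : R).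
Hypothesis eps01 : 0 < eps < 1.
Hypothesis k1 : (1 <= \dim C)%N.

Let T := code_support C.
Let p := samp_prob C eps.
Let k : R := (\dim C)%:R.
Let q : R := #|F|%:R.
Let L : R := 10 * k * log2 q.

Lemma q2 : 2 <= q.
Proof. by rewrite /q ler_nat; apply: card_finNzRing_gt1. Qed.

Lemma l2_gt0 : 0 < ln (2 : R).
Proof. by apply: ln_gt0; lra. Qed.

Lemma l2_le1 : ln (2 : R) <= 1.
Proof. have := @le_ln1Dx R 1 ltac:(lra); by rewrite (_ : 1 + 1 = 2 :> R) //; lra. Qed.

Lemma lq_ge : ln 2 <= ln q.
Proof. by rewrite ler_ln ?posrE ?q2 //; have := q2; lra. Qed.

Lemma k_ge1 : 1 <= k.
Proof. by rewrite /k ler1n. Qed.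

Lemma log2q_ge1 : 1 <= log2 q.
Proof.
rewrite /log2 ler_pdivlMr ?mul1r; [exact: lq_ge| exact: l2_gt0].
Qed.

Lemma L_gt0 : 0 < L.
Proof. have := k_ge1; have := log2q_ge1; rewrite /L; nra. Qed.

Lemma p_ge0 i : 0 <= p i.
Proof.
rewrite /p /samp_prob le_min ler01 /=.
apply: divr_ge0; first by have := L_gt0; rewrite /L; lra.
by rewrite mulr_ge0 ?exprn_ge0 ?ler0n //; case/andP: eps01 => /ltW.
Qed.

Lemma p_le1 i : p i <= 1.
Proof. by rewrite /p /samp_prob ge_min lexx. Qed.

Lemma p_gt0 i : i \in T -> 0 < p i.
Proof.
move=> iT; rewrite /p /samp_prob lt_min ltr01 /=.
have := L_gt0; rewrite /L => h; apply: divr_gt0 => //.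
rewrite mulr_gt0 ?exprn_gt0 ?ltr0n ?min_wt_gt0 //; by case/andP: eps01.
Qed.

Lemma p_lt1 i : p i < 1 -> p i = L / (eps ^+ 2 * (min_wt C i)%:R).
Proof.
rewrite /p /samp_prob; case: (leP 1 (L / (eps ^+ 2 * (min_wt C i)%:R))) => h.
  by rewrite ltxx.
by [].
Qed.


Definition Xv (v : 'rV[F]_n) (S : {set 'I_n}) : R :=
  \sum_(i in S | v 0 i != 0) samp_weight C eps i.

Lemma mgf v (t : R) : v \in C ->
  \sum_S PS T p S * expR (t * Xv v S) =
  \prod_(i | v 0 i != 0) (p i * expR (t / p i) + (1 - p i)).
Proof.
move=> vC.
transitivity (\sum_S PS T p S * \prod_i
   (fun i (b : bool) => if b && (v 0 i != 0) then expR (t / p i) else 1) i (i \in S)).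
  apply: eq_bigr => S _; congr (_ * _).
  rewrite /Xv mulr_sumr expR_sum big_mkcond /=; apply: eq_bigr => i _.
  by rewrite /samp_weight.
rewrite (Eprod T p (fun i (b : bool) => if b && (v 0 i != 0) then expR (t / p i) else 1)).
rewrite [RHS]big_mkcond /=; apply: eq_bigr => i _.
rewrite /Efac /=; case vi: (v 0 i != 0).
  by rewrite (in_support vC vi) /= mulr1.
by case: ifP => _; rewrite ?mulr1 //; lra.
Qed.

Definition Mv (v : 'rV[F]_n) : R := eps ^+ 2 * (wt v)%:R / L.

Lemma eps_gt0 : 0 < eps. Proof. by case/andP: eps01. Qed.
Lemma eps_lt1 : eps < 1. Proof. by case/andP: eps01. Qed.

Lemma wt_nz (v : 'rV[F]_n) : v != 0 -> (0 < wt v)%N.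
Proof.
move=> vn0.
have [j vj] : exists j, v 0 j != 0.
  apply/existsP; apply: contraR vn0 => /existsPn h; apply/eqP/rowP => j.
  by rewrite mxE; apply/eqP; apply/negPn; rewrite h.
exact: wt_gt0 vj.
Qed.

Lemma Mv_gt0 (v : 'rV[F]_n) : v != 0 -> 0 < Mv v.
Proof.
move=> vn0.
rewrite /Mv divr_gt0 ?L_gt0 // mulr_gt0 ?exprn_gt0 ?eps_gt0 // ltr0n.
exact: wt_nz.
Qed.

Lemma pinv_le (v : 'rV[F]_n) i : v \in C -> v 0 i != 0 -> p i < 1 -> (p i)^-1 <= Mv v.
Proof.
move=> vC vi /p_lt1 ->.
have w0 : (0 < min_wt C i)%N by apply: min_wt_gt0; exact: in_support vC vi.
rewrite invf_div /Mv ler_pM2r ?invr_gt0 ?L_gt0 // ler_pM2l ?exprn_gt0 ?eps_gt0 //.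
by rewrite ler_nat min_wt_le.
Qed.

Lemma prod_bound (v : 'rV[F]_n) (G : 'I_n -> R) c : v \in C ->
  (forall i, v 0 i != 0 -> 0 <= G i <= expR c) ->
  \prod_(i | v 0 i != 0) G i <= expR ((wt v)%:R * c).
Proof.
move=> vC h. apply: le_trans (@ler_prod _ _ (index_enum 'I_n) (fun i => v 0 i != 0) G (fun _ => expR c) h) _.
rewrite expRM_natl -(prodr_const (mem [set i | v 0 i != 0])).
by rewrite le_eqVlt; apply/orP; left; apply/eqP; apply: eq_bigl => i; rewrite inE.
Qed.

Lemma upper_tail (v : 'rV[F]_n) : v \in C -> v != 0 ->
  \sum_S PS T p S * expR (eps / (2 * Mv v) * (Xv v S - (1 + eps) * (wt v)%:R))
  <= expR (- (L / 4)).
Proof.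
move=> vC vn0; have M0 := Mv_gt0 vn0.
set M := Mv v in M0 *; set t := eps / (2 * M); set W := (wt v)%:R.
have t0 : 0 <= t by apply: divr_ge0; [exact: ltW eps_gt0 | rewrite mulr_ge0 // ltW].
have -> : \sum_S PS T p S * expR (t * (Xv v S - (1 + eps) * W)) =
   expR (- (t * ((1 + eps) * W))) * \sum_S PS T p S * expR (t * Xv v S).
  rewrite mulr_sumr; apply: eq_bigr => S _.
  by rewrite mulrCA -expRD mulrBr addrC.
rewrite mgf //.
apply: le_trans (_ : expR (- (t * ((1 + eps) * W))) * expR (W * (t + t ^+ 2 * M)) <= _).
  rewrite ler_pM2l ?expR_gt0 //; apply: prod_bound => // i vi.
  have iT : i \in T by apply: in_support vC vi.
  apply/andP; split.
    by rewrite addr_ge0 ?mulr_ge0 ?expR_ge0 ?p_ge0 // subr_ge0 p_le1.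
  apply: fac_up => //.
  - by rewrite p_gt0 ?p_le1.
  - exact: pinv_le.
  - exact: ltW.
  - have -> : t * M = eps / 2 by rewrite /t; field; rewrite gt_eqF.
    by have := eps_lt1; lra.
rewrite -expRD ler_expR le_eqVlt; apply/orP; left; apply/eqP.
have L0 := L_gt0.
have W0 : 0 < W by rewrite /W ltr0n; exact: wt_nz.
rewrite /t /M /Mv -/W; field.
by rewrite !gt_eqF ?eps_gt0.
Qed.

Lemma lower_tail (v : 'rV[F]_n) : v \in C -> v != 0 ->
  \sum_S PS T p S * expR (2 * eps / (3 * Mv v) * ((1 - eps) * (wt v)%:R - Xv v S))
  <= expR (- (L / 3)).
Proof.
move=> vC vn0; have M0 := Mv_gt0 vn0.
set M := Mv v in M0 *; set t := 2 * eps / (3 * M); set W := (wt v)%:R.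
have t0 : 0 <= t.
  by apply: divr_ge0; [have := eps_gt0; lra | rewrite mulr_ge0 // ltW].
have -> : \sum_S PS T p S * expR (t * ((1 - eps) * W - Xv v S)) =
   expR (t * ((1 - eps) * W)) * \sum_S PS T p S * expR ((- t) * Xv v S).
  rewrite mulr_sumr; apply: eq_bigr => S _.
  by rewrite mulrCA -expRD mulrBr mulNr.
rewrite mgf //.
apply: le_trans (_ : expR (t * ((1 - eps) * W)) * expR (W * (- t + 3/4 * t ^+ 2 * M)) <= _).
  rewrite ler_pM2l ?expR_gt0 //; apply: prod_bound => // i vi.
  have iT : i \in T by apply: in_support vC vi.
  apply/andP; split.
    by rewrite addr_ge0 ?mulr_ge0 ?expR_ge0 ?p_ge0 // subr_ge0 p_le1.
  rewrite mulNr; apply: fac_lo => //.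
  - by rewrite p_gt0 ?p_le1.
  - exact: pinv_le.
  - exact: ltW.
rewrite -expRD ler_expR le_eqVlt; apply/orP; left; apply/eqP.
have L0 := L_gt0.
have W0 : 0 < W by rewrite /W ltr0n; exact: wt_nz.
rewrite /t /M /Mv -/W; field.
by rewrite !gt_eqF ?eps_gt0.
Qed.

Definition Yv (v : 'rV[F]_n) (S : {set 'I_n}) : R :=
  if v == 0 then 0 else
  expR (eps / (2 * Mv v) * (Xv v S - (1 + eps) * (wt v)%:R)) +
  expR (2 * eps / (3 * Mv v) * ((1 - eps) * (wt v)%:R - Xv v S)).

Lemma Yv_ge0 v S : 0 <= Yv v S.
Proof. by rewrite /Yv; case: ifP => _ //; rewrite addr_ge0 ?expR_ge0. Qed.

Lemma EYv v : v \in C -> \sum_S PS T p S * Yv v S <= expR (- (L / 4)) + expR (- (L / 3)).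
Proof.
move=> vC; rewrite /Yv; case: eqP => [_|/eqP vn0].
  by under eq_bigr do rewrite mulr0; rewrite big1 // addr_ge0 ?expR_ge0.
under eq_bigr do rewrite mulrDr; rewrite big_split /=.
by apply: lerD; [exact: upper_tail | exact: lower_tail].
Qed.

Let bound : R := (1000%N)%:R * k ^+ 2 * log2 q / eps ^+ 2.

Lemma bound_gt0 : 0 < bound.
Proof.
rewrite /bound; apply: divr_gt0; last by rewrite exprn_gt0 ?eps_gt0.
have h1 := k_ge1; have h2 := log2q_ge1.
apply: mulr_gt0; last by lra.
by apply: mulr_gt0; [rewrite ltr0n | rewrite exprn_gt0 //; lra].
Qed.

Lemma Esize : \sum_S PS T p S * (#|S|%:R / bound) <= 1 / 100.
Proof.
have p01 : forall i, i \in T -> 0 <= p i <= 1 by move=> i _; rewrite p_ge0 p_le1.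
under eq_bigr do rewrite mulrA; rewrite -mulr_suml Ecard.
have E1 : \sum_(i in T) p i <= L / eps ^+ 2 * k.
  apply: le_trans (_ : \sum_(i in T) L / eps ^+ 2 * ((min_wt C i)%:R)^-1 <= _).
    apply: ler_sum => i _; rewrite /p /samp_prob ge_min; apply/orP; right.
    by rewrite invfM mulrA.
  rewrite -mulr_sumr ler_wpM2l ?sum_inv_min_wt //.
  by rewrite divr_ge0 ?exprn_ge0 ?ltW ?L_gt0 ?eps_gt0.
rewrite ler_pdivrMr ?bound_gt0 //; apply: le_trans E1 _.
rewrite /bound /L /k le_eqVlt; apply/orP; left; apply/eqP.
field; by rewrite gt_eqF ?eps_gt0.
Qed.

Lemma union_num : (#|C|)%:R * (expR (- (L / 4)) + expR (- (L / 3))) <= 3 / 4.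
Proof.
have l20 := l2_gt0; have l21 := l2_le1; have r1 := log2q_ge1; have kk := k_ge1.
have q0 : 0 < q by have := q2; lra.
set l2 := ln (2 : R) in l20 l21 *.
set r := log2 q in r1 *.
have lqE : ln q = r * l2 by rewrite /r /log2 mulfVK // gt_eqF.
have cC : (#|C|)%:R = expR (k * ln q).
  by rewrite card_vspace natrX -/q -{1}(lnK (x := q)) ?posrE // -expRM_natl.
have e2 : expR (- l2) = 1 / 2.
  by rewrite expRN lnK ?posrE // div1r.
have e4 : expR (- (2 * l2)) = 1 / 4.
  by rewrite expRN expRM_natl lnK ?posrE // div1r; lra.
rewrite cC mulrDr -!expRD.
have kr1 : 1 <= k * r by nra.
have h1 : expR (k * ln q + - (L / 4)) <= 1 / 2.
  rewrite -e2 ler_expR lqE /L -/r.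
  have : k * r * (l2 - 5 / 2) <= -l2 by nra.
  lra.
have h2 : expR (k * ln q + - (L / 3)) <= 1 / 4.
  rewrite -e4 ler_expR lqE /L -/r.
  have : k * r * (l2 - 10 / 3) <= - 2 * l2 by nra.
  lra.
lra.
Qed.

Definition good (S : {set 'I_n}) : bool :=
  `[< (#|S|%:R <= bound) /\ is_sparsifier C eps S (samp_weight C eps) >].

Lemma Yv_ge1 (v : 'rV[F]_n) (S : {set 'I_n}) : v \in C ->
  ~ ((1 - eps) * (wt v)%:R <= \sum_(i in S | v 0 i != 0) samp_weight C eps i /\
     \sum_(i in S | v 0 i != 0) samp_weight C eps i <= (1 + eps) * (wt v)%:R) ->
  1 <= Yv v S.
Proof.
move=> vC hv; have [v0|vn0] := eqVneq v 0.
  exfalso; apply: hv; rewrite v0 wt0 mulr0 big_pred0 ?lexx ?mulr0 //; last first.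
  by move=> i /=; rewrite mxE eqxx andbF.
have M0 := Mv_gt0 vn0.
rewrite /Yv (negbTE vn0) -/(Xv v S).
have e0 : 0 < eps := eps_gt0.
case: (leP ((1 - eps) * (wt v)%:R) (Xv v S)) => hlo.
  have hhi : (1 + eps) * (wt v)%:R < Xv v S.
    rewrite ltNge; apply/negP => hh; exact: hv.
  have t0 : 0 < eps / (2 * Mv v) by rewrite divr_gt0 // mulr_gt0.
  apply: le_trans (_ : expR (eps / (2 * Mv v) * (Xv v S - (1 + eps) * (wt v)%:R)) <= _).
    apply: le_trans (expR_ge1Dx _); rewrite lerDl mulr_ge0 ?ltW // subr_gt0 //.
  by rewrite lerDl expR_ge0.
have t0 : 0 < 2 * eps / (3 * Mv v) by apply: divr_gt0; [lra | apply: mulr_gt0 => //; lra].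
apply: le_trans (_ : expR (2 * eps / (3 * Mv v) * ((1 - eps) * (wt v)%:R - Xv v S)) <= _).
  apply: le_trans (expR_ge1Dx _); rewrite lerDl mulr_ge0 ?ltW // subr_gt0 //.
by rewrite lerDr expR_ge0.
Qed.

Lemma bad_le (S : {set 'I_n}) : ~~ good S -> 1 <= #|S|%:R / bound + \sum_(v in C) Yv v S.
Proof.
move=> /asboolPn h.
have b0 := bound_gt0.
have s0 : 0 <= \sum_(v in C) Yv v S by apply: sumr_ge0 => v _; exact: Yv_ge0.
have q0 : 0 <= #|S|%:R / bound by rewrite divr_ge0 // ltW.
case: (leP (#|S|%:R) bound) => hs; last first.
  have : 1 <= #|S|%:R / bound by rewrite ler_pdivlMr // mul1r ltW.
  lra.
case: (pselect (exists v, v \in C /\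
   ~ ((1 - eps) * (wt v)%:R <= \sum_(i in S | v 0 i != 0) samp_weight C eps i /\
     \sum_(i in S | v 0 i != 0) samp_weight C eps i <= (1 + eps) * (wt v)%:R))).
  case=> v [vC hv]; have := Yv_ge1 vC hv.
  rewrite (bigD1 v) //= => h1.
  have : 0 <= \sum_(i in C | i != v) Yv i S by apply: sumr_ge0 => u _; exact: Yv_ge0.
  lra.
move=> hn; exfalso; apply: h; split => //; split.
  by move=> i _; rewrite /samp_weight invr_ge0 p_ge0.
move=> v vC; case: (pselect ((1 - eps) * (wt v)%:R <= \sum_(i in S | v 0 i != 0) samp_weight C eps i /\
     \sum_(i in S | v 0 i != 0) samp_weight C eps i <= (1 + eps) * (wt v)%:R)) => // hv.
by exfalso; apply: hn; exists v.
Qed.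

Lemma main_pos : 0 < \sum_(S | good S) PS T p S.
Proof.
have p01 : forall i, i \in T -> 0 <= p i <= 1 by move=> i _; rewrite p_ge0 p_le1.
have tot := PS_sum1 T p.
rewrite (bigID good) /= in tot.
have hb : \sum_(S | ~~ good S) PS T p S <= 1 / 100 + 3 / 4.
  apply: le_trans (_ : \sum_S PS T p S * (#|S|%:R / bound + \sum_(v in C) Yv v S) <= _).
    rewrite [X in _ <= X](bigID good) /= -[X in X <= _]add0r.
    apply: lerD.
      apply: sumr_ge0 => S _; rewrite mulr_ge0 ?(PS_ge0 p01) // addr_ge0 //; first by rewrite divr_ge0 // ltW // bound_gt0.
      by apply: sumr_ge0 => v _; exact: Yv_ge0.
    apply: ler_sum => S hS; rewrite -[X in X <= _]mulr1 ler_wpM2l ?(PS_ge0 p01) //.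
    exact: bad_le.
  under eq_bigr do rewrite mulrDr; rewrite big_split /=; apply: lerD.
    exact: Esize.
  under eq_bigr do rewrite mulr_sumr; rewrite exchange_big /=.
  apply: le_trans union_num.
  apply: le_trans (_ : \sum_(v in C) (expR (- (L / 4)) + expR (- (L / 3))) <= _).
    by apply: ler_sum => v vC; exact: EYv.
  by rewrite sumr_const mulr_natl.
lra.
Qed.

Lemma PS_samp (S : {set 'I_n}) : S \subset T -> PS T p S = samp_pr C eps S.
Proof.
move=> ST; rewrite /PS /samp_pr (bigID (fun i => i \in T)) /= [X in _ * X]big1 ?mulr1.
  by apply: eq_bigr => i iT; rewrite /pfac iT.
move=> i /negbTE iT; rewrite /pfac iT; case: ifP => // iS.
by move: iT; rewrite (subsetP ST i iS).
Qed.

Lemma main_all :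
  (exists (S : {set 'I_n}) (w : 'I_n -> R),
        (#|S|%:R <= bound) /\ is_sparsifier C eps S w) /\
  0 < \sum_(S : {set 'I_n} | (S \subset code_support C) && good S) samp_pr C eps S.
Proof.
have hp := main_pos.
have -> : \sum_(S : {set 'I_n} | (S \subset code_support C) && good S) samp_pr C eps S
          = \sum_(S | good S) PS T p S.
  rewrite [X in _ = X](bigID (fun S : {set 'I_n} => S \subset T)) /= [X in _ = _ + X]big1 ?addr0.
    by apply: eq_big => [S|S /andP[ST _]]; [rewrite andbC | rewrite PS_samp].
  move=> S /andP[_ nST]; apply/eqP; apply: contraNT nST => h.
  exact: PS_subset h.
split => //.
case: (pickP good) => [S gS|ng].
  by move/asboolP: gS => [h1 h2]; exists S, (samp_weight C eps).
by move: hp; rewrite big_pred0 ?ltxx.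
Qed.

End Main.


Theorem mainTheorem7 :
  exists Cst : rat,
  forall (R : realType) (F : finFieldType) (n : nat)
         (C : {vspace 'rV[F]_n}) (eps : R),
    0 < eps < 1 -> (1 <= \dim C)%N ->
    let bound : R :=
      ratr Cst * (\dim C)%:R ^+ 2 * log2 (#|F|%:R : R) / eps ^+ 2 in
    (exists (S : {set 'I_n}) (w : 'I_n -> R),
        (#|S|%:R <= bound) /\ is_sparsifier C eps S w) /\
    0 < \sum_(S : {set 'I_n} | (S \subset code_support C) &&
                               `[< (#|S|%:R <= bound) /\
                                   is_sparsifier C eps S (samp_weight C eps) >])
          samp_pr C eps S.
Proof.
exists ((1000%N)%:R) => R F n C eps heps hk bound.
rewrite /bound ratr_nat.
exact: (main_all heps hk).
Qed.
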